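(* If a Möbius transformation of $\mathcal A_2^{(0,1)}\cup\{\infty\}$ fixes each of $-e_2$, $e_2$, $0$ and $\infty$, then its Vahlen matrices are of the form $\pm\begin{pmatrix}a&0\\0&a^{-1}\end{pmatrix}$ with $a\in\mathbb R+\mathbb Re_1$ and $|a|=1$.
   Context: $\mathcal A_2$ is the real associative algebra generated by $e_1,e_2$ with $e_1^2=e_2^2=-1$, $e_1e_2=-e_2e_1$; for $a=a_0+a_1e_1+a_2e_2+a_{12}e_1e_2$, $|a|^2=a_0^2+a_1^2+a_2^2+a_{12}^2$ and $a^*=a_0+a_1e_1+a_2e_2-a_{12}e_1e_2$. $\mathcal A_2^{(0,1)}=\mathbb R+\mathbb Re_1+\mathbb Re_2$. A Vahlen matrix is $\begin{pmatrix}a&b\\c&d\end{pmatrix}$ with $a,b,c,d\in\mathcal A_2$, $ad^*-bc^*=1$ and $ab^*,cd^*\in\mathcal A_2^{(0,1)}$; it acts by $x\mapsto(ax+b)(cx+d)^{-1}$, $\infty\mapsto ac^{-1}$. The Möbius transformations of $\mathcal A_2^{(0,1)}\cup\{\infty\}$ are exactly these maps, each given by exactly two Vahlen matrices $\pm A$. *)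

(* Defs.v *)
(* The Clifford algebra A_2 (= Hamilton quaternions with
   e1 = i, e2 = j, e1 e2 = k) over a real closed field R. *)
From HB Require Import structures.
From mathcomp Require Import all_boot all_order all_algebra.
Set Implicit Arguments. Unset Strict Implicit. Unset Printing Implicit Defensive.
Import Order.TTheory GRing.Theory Num.Theory.
Local Open Scope ring_scope.

(* a = q0 + q1 e1 + q2 e2 + q12 e1e2 *)
Record A2 (R : rcfType) := MkA2 { q0 : R; q1 : R; q2 : R; q12 : R }.

Section A2ops.
Variable R : rcfType.
Implicit Types x y : A2 R.

Definition a2zero : A2 R := MkA2 0 0 0 0.
Definition a2one : A2 R := MkA2 1 0 0 0.
Definition a2e1 : A2 R := MkA2 0 1 0 0.
Definition a2e2 : A2 R := MkA2 0 0 1 0.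

Definition a2add x y : A2 R :=
  MkA2 (q0 x + q0 y) (q1 x + q1 y) (q2 x + q2 y) (q12 x + q12 y).
Definition a2opp x : A2 R := MkA2 (- q0 x) (- q1 x) (- q2 x) (- q12 x).
Definition a2sub x y := a2add x (a2opp y).
Definition a2scale (r : R) x : A2 R :=
  MkA2 (r * q0 x) (r * q1 x) (r * q2 x) (r * q12 x).

(* product determined by e1^2 = e2^2 = -1, e1 e2 = - e2 e1 *)
Definition a2mul x y : A2 R :=
  MkA2 (q0 x * q0 y - q1 x * q1 y - q2 x * q2 y - q12 x * q12 y)
       (q0 x * q1 y + q1 x * q0 y + q2 x * q12 y - q12 x * q2 y)
       (q0 x * q2 y - q1 x * q12 y + q2 x * q0 y + q12 x * q1 y)
       (q0 x * q12 y + q1 x * q2 y - q2 x * q1 y + q12 x * q0 y).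

Definition a2normsq x : R := q0 x ^+ 2 + q1 x ^+ 2 + q2 x ^+ 2 + q12 x ^+ 2.
Definition a2norm x : R := Num.sqrt (a2normsq x).

(* the involution a^* of the paper (reversion) *)
Definition a2star x : A2 R := MkA2 (q0 x) (q1 x) (q2 x) (- q12 x).

(* Clifford conjugate a-bar (negates e1, e2, e1e2); a a-bar = |a|^2 *)
Definition a2bar x : A2 R := MkA2 (q0 x) (- q1 x) (- q2 x) (- q12 x).

(* multiplicative inverse a^{-1} = a-bar / |a|^2 (equal to 0 for a = 0,
   never used there) *)
Definition a2inv x : A2 R := a2scale (a2normsq x)^-1 (a2bar x).

(* membership in A_2^{(0,1)} = R + R e1 + R e2 *)
Definition in_A2_01 x : Prop := q12 x = 0.

Definition vahlen (a b c d : A2 R) : Prop :=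
  a2sub (a2mul a (a2star d)) (a2mul b (a2star c)) = a2one /\
  in_A2_01 (a2mul a (a2star b)) /\ in_A2_01 (a2mul c (a2star d)).

(* Action on A_2^{(0,1)} u {oo}, with None = oo:
   x |-> (a x + b)(c x + d)^{-1}  (oo if c x + d = 0),  oo |-> a c^{-1} (oo if c = 0) *)
Definition mobius_act (a b c d : A2 R) (p : option (A2 R)) : option (A2 R) :=
  match p with
  | Some x =>
      let den := a2add (a2mul c x) d in
      if a2normsq den == 0 then None
      else Some (a2mul (a2add (a2mul a x) b) (a2inv den))
  | None => if a2normsq c == 0 then None else Some (a2mul a (a2inv c))
  end.

End A2ops.

(* Main.v *)
Require Import Defs.
From mathcomp Require Import all_boot all_order all_algebra.
From mathcomp Require Import ring lra.
Set Implicit Arguments. Unset Strict Implicit. Unset Printing Implicit Defensive.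
Import Order.TTheory GRing.Theory Num.Theory.
Local Open Scope ring_scope.

Section H.
Variable R : rcfType.
Implicit Types x y z : A2 R.

Lemma mulA x y z : a2mul (a2mul x y) z = a2mul x (a2mul y z).
Proof. case: x => ????; case: y => ????; case: z => ????; rewrite /a2mul /=; congr MkA2; ring. Qed.

Lemma mul0a x : a2mul (a2zero R) x = a2zero R.
Proof. case: x => ????; rewrite /a2mul /=; congr MkA2; ring. Qed.
Lemma mula0 x : a2mul x (a2zero R) = a2zero R.
Proof. case: x => ????; rewrite /a2mul /=; congr MkA2; ring. Qed.
Lemma add0a x : a2add (a2zero R) x = x.
Proof. case: x => ????; rewrite /a2add /=; congr MkA2; ring. Qed.
Lemma adda0 x : a2add x (a2zero R) = x.
Proof. case: x => ????; rewrite /a2add /=; congr MkA2; ring. Qed.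
Lemma mula1 x : a2mul x (a2one R) = x.
Proof. case: x => ????; rewrite /a2mul /=; congr MkA2; ring. Qed.

Lemma mulinvl x : a2normsq x != 0 -> a2mul (a2inv x) x = a2one R.
Proof.
case: x => x0 x1 x2 x3; rewrite /a2normsq /a2inv /a2mul /a2scale /= => nz.
rewrite /a2normsq /=.
congr MkA2; field; by [].
Qed.

Lemma solve p x q : a2normsq x != 0 -> a2mul p (a2inv x) = q -> p = a2mul q x.
Proof. by move=> nz <-; rewrite mulA mulinvl // mula1. Qed.

Lemma sq4 (x y z w : R) : x ^+ 2 + y ^+ 2 + z ^+ 2 + w ^+ 2 = 0 -> x = 0 /\ y = 0 /\ z = 0 /\ w = 0.
Proof.
move=> h.
have hx : x ^+ 2 = 0 by nra.
have hy : y ^+ 2 = 0 by nra.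
have hz : z ^+ 2 = 0 by nra.
have hw : w ^+ 2 = 0 by nra.
by move: hx hy hz hw => /eqP; rewrite sqrf_eq0 => /eqP -> /eqP; rewrite sqrf_eq0 => /eqP ->
  /eqP; rewrite sqrf_eq0 => /eqP -> /eqP; rewrite sqrf_eq0 => /eqP ->.
Qed.

End H.

Theorem proposition3p4 (R : rcfType) (a b c d : A2 R) :
  vahlen a b c d ->
  mobius_act a b c d (Some (a2opp (a2e2 R))) = Some (a2opp (a2e2 R)) ->
  mobius_act a b c d (Some (a2e2 R)) = Some (a2e2 R) ->
  mobius_act a b c d (Some (a2zero R)) = Some (a2zero R) ->
  mobius_act a b c d None = None ->
  exists u : A2 R,
    q2 u = 0 /\ q12 u = 0 /\ a2norm u = 1 /\
    ((a = u /\ b = a2zero R /\ c = a2zero R /\ d = a2inv u) \/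
     (a = a2opp u /\ b = a2zero R /\ c = a2zero R /\ d = a2opp (a2inv u))).
Proof.
move=> [Hv _] _ He H0 Hinf.
have Hc : c = a2zero R.
  clear Hv He H0; move: Hinf; rewrite /mobius_act; case: ifP => // /eqP.
  case: c => c0 c1 c2 c3; rewrite /a2normsq /= => /sq4 [-> [-> [-> ->]]] _; by [].
subst c.
move: H0 He; rewrite /mobius_act !mul0a !add0a; case: ifP => // nz.
move=> H0 He; have {H0}H0 := Some_inj H0; have {He}He := Some_inj He.
rewrite mula0 add0a in H0.
have Hb := solve (negbT nz) H0; rewrite mul0a in Hb; subst b.
rewrite adda0 in He; have {}He := solve (negbT nz) He.
clear Hinf H0; move: Hv He nz; case: a => a0 a1 a2 a3; case: d => d0 d1 d2 d3.
rewrite /a2sub /a2mul /a2star /a2add /a2opp /= => -[v0 v1 v2 v3] [e0 e1 e2 e3] nz.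
have hd0 : d0 = a0 by lra.
have hd1 : d1 = - a1 by lra.
have hd2 : d2 = a2 by lra.
have hd3 : d3 = - a3 by lra.
subst d0 d1 d2 d3.
have w2 : a0 * a2 - a1 * a3 = 0 by lra.
have w3 : a0 * a3 + a1 * a2 = 0 by lra.
have w0 : a0 ^+ 2 + a1 ^+ 2 - a2 ^+ 2 - a3 ^+ 2 = 1 by rewrite -v0; ring.
have k2 : (a0 ^+ 2 + a1 ^+ 2) * a2 = 0.
  by rewrite -[RHS](_ : a0 * (a0 * a2 - a1 * a3) + a1 * (a0 * a3 + a1 * a2) = 0);
    [ring | rewrite w2 w3; ring].
have k3 : (a0 ^+ 2 + a1 ^+ 2) * a3 = 0.
  by rewrite -[RHS](_ : a0 * (a0 * a3 + a1 * a2) - a1 * (a0 * a2 - a1 * a3) = 0);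
    [ring | rewrite w2 w3; ring].
have pn : a0 ^+ 2 + a1 ^+ 2 != 0.
  apply/eqP => h; nra.
move: k2 k3 => /eqP; rewrite mulf_eq0 (negbTE pn) /= => /eqP h2 /eqP;
  rewrite mulf_eq0 (negbTE pn) /= => /eqP h3.
subst a2 a3.
have n1 : a0 ^+ 2 + a1 ^+ 2 = 1 by rewrite -w0; ring.
have ns : a2normsq (MkA2 a0 a1 0 0) = 1 by rewrite /a2normsq /= -n1; ring.
exists (MkA2 a0 a1 0 0); split; first by [].
split; first by [].
split; first by rewrite /a2norm ns sqrtr1.
left; split; first by []. split; first by []. split; first by [].
rewrite /a2inv ns invr1 /a2scale /a2bar /=; congr MkA2; ring.
Qed.
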